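(* Let $n, p, d$ be positive integers with $p \le n$, $d\ge 2$, let $b>0$, let $0<\epsilon<1$, and let $1 \le i \le n-p+1$. Consider a sequence of $n+p$ polynomials in two blocks of variables $\bm{x}=(x_1,\dots,x_n)$ and $\bm{\ell}=(\ell_1,\dots,\ell_p)$ consisting of: $i-1$ polynomials $x_k - \sigma_k$ ($1\le k\le i-1$) of bi-degree $(1,0)$; $p$ polynomials $f_1^{\bm A},\dots,f_p^{\bm A}$ of bi-degree $(d,0)$; $n-i$ polynomials (the entries of $[\ell_1\cdots\ell_p]\,\mathrm{jac}(\bm f^{\bm A}, i)$) of bi-degree $(d-1,1)$; and one polynomial $u_1\ell_1+\dots+u_p\ell_p-1$ of bi-degree $(0,1)$. Here $\bm f=(f_1,\dots,f_p)\subset\mathbb{Z}[x_1,\dots,x_n]$ has $\deg f_j\le d$, $\mathrm{ht}(f_j)\le b$; $\bm A\in \mathrm{GL}_n(\mathbb{Z})$ has entries of height in $O(\log(1/\epsilon)+n\log d)$; $f_j^{\bm A}(\bm x) = f_j(\bm A\bm x)$; $\mathrm{jac}(\bm f^{\bm A}, i)$ is the $p\times(n-i)$ matrix $(\partial f_j^{\bm A}/\partial x_k)_{1\le j\le p,\, i+1\le k\le n}$; and the integers $\sigma_k, u_j$ have height in $\widetilde{O}(\log(1/\epsilon)+n\log d)$. Let $\bm d_i = ((d_{j,1},d_{j,2}))_{1\le j\le n+p}$ be the sequence of these bi-degrees, and let the height bounds be $s_j\in\widetilde{O}(b+d\log(1/\epsilon)+dn)$ for the polynomials involving $\bm f^{\bm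 A}$ and $s_j\in \widetilde{O}(\log(1/\epsilon)+n\log d)$ for the remaining (linear) ones, with $\eta_j = s_j + \log(n+1)d_{j,1}+\log(p+1)d_{j,2}$. Then \[ \mathscr{C}_{\bm n}(\bm d_i) = \binom{n-i}{p-1} d^p (d-1)^{n-p-i+1} \quad\text{and}\quad \mathscr{H}_{\bm n}(\bm\eta_i,\bm d_i)\in \widetilde{O}\left(n(b+d\log(1/\epsilon)+dn)\binom{n}{p} d^p (d-1)^{n-p}\right). \]
   Context: Logarithms are base $2$; $\widetilde{O}$ omits poly-logarithmic factors. The height $\mathrm{ht}$ of a nonzero rational $a/q$ in lowest terms ($q>0$) is $\max(\log|a|,\log q)$; the height of a rational polynomial $g$ is the maximum of $\log v$ and the heights of the coefficients of $vg$, where $v$ is the lcm of the denominators of the coefficients of $g$. The bi-degree of a polynomial is the pair (degree in $\bm x$, degree in $\bm\ell$). With $\bm n=(n,p)$: $\mathscr{C}_{\bm n}(\bm d_i)$ is the sum of the coefficients of $\prod_{j=1}^{n+p}(d_{j,1}\theta_1+d_{j,2}\theta_2) \bmod \langle\theta_1^{n+1},\theta_2^{p+1}\rangle$, and $\mathscr{H}_{\bm n}(\bm\eta_i,\bm d_i)$ is the sum of the coefficients of $\prod_{j=1}^{n+p}(\eta_j\zeta+d_{j,1}\theta_1+d_{j,2}\theta_2) \bmod \langle\zeta^2,\theta_1^{n+1},\theta_2^{p+1}\rangle$, where $\zeta,\theta_1,\theta_2$ are new indeterminates. *)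

(* Defs.v *)
From HB Require Import structures.
From mathcomp Require Import all_boot all_order all_algebra.
From mathcomp Require Import reals exp.
Set Implicit Arguments. Unset Strict Implicit. Unset Printing Implicit Defensive.
Import Order.TTheory GRing.Theory Num.Theory.
Local Open Scope ring_scope.

Section Defs.
Variable R : realType.

Definition log2 (x : R) : R := ln x / ln 2.

(* C_n(d): sum of coefficients of prod_j (d_{j,1} th1 + d_{j,2} th2)
   mod <th1^{n+1}, th2^{p+1}>.  Bivariate polynomials are {poly {poly R}}:
   th1 = outer 'X, th2 = ('X)%:P; coefficient of th1^a th2^b is P`_a`_b. *)
Definition Cn (n p : nat) (ds : seq (nat * nat)) : R :=
  let P : {poly {poly R}} :=
    \prod_(dj <- ds) (dj.1%:R * 'X + ((dj.2%:R * 'X : {poly R}))%:P) in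
  \sum_(a < n.+1) \sum_(b < p.+1) (P`_a)`_b.

(* H_n(eta, d): sum of coefficients of prod_j (eta_j z + d_{j,1} th1 + d_{j,2} th2)
   mod <z^2, th1^{n+1}, th2^{p+1}>.  Trivariate polynomials {poly {poly {poly R}}}:
   z = outer 'X, th1 = ('X)%:P, th2 = ('X)%:P%:P; coefficient of z^c th1^a th2^b
   is P`_c`_a`_b.  The input is the sequence of triples (eta_j, d_{j,1}, d_{j,2}). *)
Definition Hn (n p : nat) (eds : seq (R * (nat * nat))) : R :=
  let P : {poly {poly {poly R}}} :=
    \prod_(e <- eds)
      ((e.1%:P%:P%:P : {poly {poly {poly R}}}) * 'X
       + ((e.2.1%:R * 'X : {poly {poly R}})
          + ((e.2.2%:R * 'X : {poly R}))%:P)%:P) in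
  \sum_(c < 2) \sum_(a < n.+1) \sum_(b < p.+1) ((P`_c)`_a)`_b.

(* The bi-degree sequence d_i, in the order of the paper:
   i-1 copies of (1,0) [x_k - sigma_k], p copies of (d,0) [f_j^A],
   n-i copies of (d-1,1) [entries of l * jac(f^A,i)], one (0,1) [u.l - 1]. *)
Definition bidegs (n p d i : nat) : seq (nat * nat) :=
  nseq i.-1 (1%N, 0%N) ++ nseq p (d, 0%N) ++ nseq (n - i) (d.-1, 1%N)
  ++ [:: (0%N, 1%N)].

Definition involves_fA (n p i j : nat) : bool := (i.-1 <= j)%N && (j < (n + p).-1)%N.

Definition etas (n p d i : nat) (s : nat -> R) : seq (R * (nat * nat)) :=
  [seq (s j.1 + log2 (n.+1)%:R * (j.2.1)%:R + log2 (p.+1)%:R * (j.2.2)%:R, j.2)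
  | j <- zip (iota 0 (n + p)) (bidegs n p d i)].

Definition softO_le (C : R) (k : nat) (x G : R) : Prop :=
  x <= C * G * (log2 (2 + G)) ^+ k.

End Defs.

(* Main.v *)
Require Import Defs.
From HB Require Import structures.
From mathcomp Require Import all_boot all_order all_algebra.
From mathcomp Require Import reals exp.
From mathcomp Require Import ring lra zify.
Import Order.TTheory GRing.Theory Num.Theory.
Local Open Scope ring_scope.

Section Logs.
Variable R : realType.

Lemma ln2_gt0 : 0 < ln (2 : R).
Proof. by apply: ln_gt0; rewrite ltr1n. Qed.

Lemma log2_ge0 (x : R) : 1 <= x -> 0 <= log2 x.
Proof. by move=> h; apply: divr_ge0; [exact: ln_ge0 | exact: ltW ln2_gt0]. Qed.

Lemma log2_le (x y : R) : 0 < x -> x <= y -> log2 x <= log2 y.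
Proof.
move=> x0 xy; rewrite /log2 ler_pM2r ?invr_gt0 ?ln2_gt0 //.
by rewrite ler_ln // posrE // (lt_le_trans x0 xy).
Qed.

Lemma log2_exp n : log2 ((2 : R) ^+ n) = n%:R.
Proof.
rewrite /log2 lnXn //.
move: ln2_gt0; set l := ln _ => l0.

rewrite -[l *+ n]mulr_natr mulrAC mulfV ?mul1r //; first by rewrite gt_eqF.
Qed.

Lemma log2_le_nat n m : (n <= 2 ^ m)%N -> (0 < n)%N -> log2 (n%:R : R) <= m%:R.
Proof.
move=> h n0; rewrite -(log2_exp m); apply: log2_le; first by rewrite ltr0n.
by rewrite -natrX ler_nat.
Qed.

Lemma powle (x y : R) k : 0 <= x -> x <= y -> x ^+ k <= y ^+ k.
Proof. by move=> h1 h2; apply: lerXn2r; rewrite ?nnegrE // (le_trans h1 h2). Qed.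

End Logs.

Section Poly.
Variable R : realType.
Local Notation PP := {poly {poly R}}.

Lemma sum_one M (k0 : nat) (F : nat -> R) (P : pred nat) :
  (forall k, P k -> k = k0) ->
  \sum_(k < M) (if P k then F k else 0) = if (k0 < M)%N && P k0 then F k0 else 0.
Proof.
move=> hP; case: ltnP => hk /=.
  rewrite (bigD1 (Ordinal hk)) //= big1 ?addr0 // => k /negbTE hk'.
  case: ifP => // /hP ek; move: hk'; have -> : k = Ordinal hk by apply: val_inj.
  by rewrite eqxx.
rewrite big1 // => k _; case: ifP => // /hP ek.
by move: (ltn_ord k); rewrite ek ltnNge hk.
Qed.

Definition Lin (dj : nat * nat) : PP :=
  dj.1%:R * 'X + ((dj.2%:R * 'X : {poly R}))%:P.
Definition Pr (ds : seq (nat * nat)) : PP := \prod_(dj <- ds) Lin dj.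
Definition W n p (Q : PP) : R := \sum_(a < n.+1) \sum_(b < p.+1) (Q`_a)`_b.

Lemma Cn_W n p ds : Cn R n p ds = W n p (Pr ds).
Proof. by []. Qed.

Fixpoint D1 (ds : seq (nat * nat)) : PP :=
  if ds is x :: s then Pr s + Lin x * D1 s else 0.
Fixpoint D1e (es : seq (R * (nat * nat))) : PP :=
  if es is x :: s then x.1%:P%:P * Pr (map snd s) + Lin x.2 * D1e s else 0.

Definition P3 (es : seq (R * (nat * nat))) : {poly PP} :=
  \prod_(e <- es) (e.1%:P%:P%:P * 'X + (Lin e.2)%:P).

Lemma P3_coef es : (P3 es)`_0 = Pr (map snd es) /\ (P3 es)`_1 = D1e es.
Proof.
elim: es => [|e s [IH0 IH1]].
  by rewrite /P3 /Pr !big_nil !coef1.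
rewrite /P3 big_cons -/(P3 s) mulrDl !coefD -!mulrA !coefCM !coefXM /= IH0 IH1.
by rewrite /Pr big_cons mulr0 add0r.
Qed.

Lemma Hn_W n p es : Hn n p es = W n p (P3 es)`_0 + W n p (P3 es)`_1.
Proof. by rewrite /Hn big_ord_recl big_ord_recl big_ord0 addr0. Qed.

Definition nn (Q : PP) := forall a b, 0 <= (Q`_a)`_b.

Lemma nnD A B : nn A -> nn B -> nn (A + B).
Proof. by move=> hA hB a b; rewrite !coefD addr_ge0. Qed.

Lemma nnM A B : nn A -> nn B -> nn (A * B).
Proof.
move=> hA hB a b; rewrite coefM coef_sum; apply: sumr_ge0 => i _.
by rewrite coefM; apply: sumr_ge0 => j _; apply: mulr_ge0.
Qed.

Lemma nnC c : 0 <= c -> nn c%:P%:P.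
Proof. by move=> h a b; rewrite !coefC; case: (a == 0)%N; rewrite ?coefC ?coef0 //; case: (b == 0)%N. Qed.

Lemma nn_nat k : nn k%:R.
Proof. by rewrite -!polyC_natr; apply: nnC. Qed.

Lemma nnX : nn 'X.
Proof. by move=> a b; rewrite coefX -polyC_natr coefC; case: (b == 0)%N. Qed.

Lemma nnXC : nn ('X%:P).
Proof. by move=> a b; rewrite coefC; case: (a == 0)%N; rewrite ?coefX ?coef0. Qed.

Lemma nn_Lin dj : nn (Lin dj).
Proof.
rewrite /Lin; apply: nnD; first by apply: nnM; [apply: nn_nat | apply: nnX].
rewrite rmorphM /= polyC_natr; apply: nnM; [apply: nn_nat | apply: nnXC].
Qed.

Lemma nn1 : nn 1.
Proof. exact: (nn_nat 1). Qed.

Lemma nn_Pr ds : nn (Pr ds).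
Proof.
rewrite /Pr; elim: ds => [|x s IH]; first by rewrite big_nil; apply: nn1.
by rewrite big_cons; apply: nnM => //; apply: nn_Lin.
Qed.

Lemma nn_D1 ds : nn (D1 ds).
Proof.
elim: ds => [|x s IH] /=; first by move=> a b; rewrite !coef0.
apply: nnD; [apply: nn_Pr | apply: nnM => //; apply: nn_Lin].
Qed.

Lemma W0 n p : W n p 0 = 0.
Proof. by rewrite /W big1 // => a _; rewrite big1 // => b _; rewrite !coef0. Qed.

Lemma WD n p A B : W n p (A + B) = W n p A + W n p B.
Proof.
rewrite /W -big_split; apply: eq_bigr => a _; rewrite -big_split.
by apply: eq_bigr => b _; rewrite !coefD.
Qed.

Lemma WB n p A B : W n p (A - B) = W n p A - W n p B.
Proof.
rewrite /W -sumrB; apply: eq_bigr => a _; rewrite -sumrB.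
by apply: eq_bigr => b _; rewrite !coefB.
Qed.

Lemma WC n p c A : W n p (c%:P%:P * A) = c * W n p A.
Proof.
rewrite /W mulr_sumr; apply: eq_bigr => a _; rewrite mulr_sumr.
by apply: eq_bigr => b _; rewrite !coefCM.
Qed.

Lemma W_sum n p I (r : seq I) (P : pred I) (F : I -> PP) :
  W n p (\sum_(i <- r | P i) F i) = \sum_(i <- r | P i) W n p (F i).
Proof. exact: (big_morph _ (WD n p) (W0 n p)). Qed.

Lemma W_ge0 n p Q : nn Q -> 0 <= W n p Q.
Proof. by move=> h; apply: sumr_ge0 => a _; apply: sumr_ge0 => b _. Qed.

Lemma W_le n p A B : nn (B - A) -> W n p A <= W n p B.
Proof. by move=> h; rewrite -subr_ge0 -WB; apply: W_ge0. Qed.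

Lemma coef_mon0 a0 b0 a b :
  ((('X^a0 * ('X^b0)%:P : PP)`_a)`_b) = ((a == a0) && (b == b0))%:R.
Proof.
rewrite coefXnM; case: ltnP => h.
  by rewrite coef0 (_ : (a == a0) = false) //; apply/negbTE; rewrite neq_ltn h.
rewrite coefC subn_eq0.
have -> : (a <= a0)%N = (a == a0) by rewrite eqn_leq h andbT.
by case: (a == a0); rewrite ?coef0 ?coefXn.
Qed.

Definition mon (c : R) a0 b0 : PP := c%:P%:P * ('X^a0 * ('X^b0)%:P).

Lemma sum_ind M k0 (x : R) :
  \sum_(k < M) (if (k : nat) == k0 then x else 0) = if (k0 < M)%N then x else 0.
Proof.
by rewrite (sum_one M k0 (fun _ => x) (fun k => k == k0)) ?eqxx ?andbT // => k /eqP.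
Qed.

Lemma W_mon n p c a0 b0 :
  W n p (mon c a0 b0) = if (a0 <= n)%N && (b0 <= p)%N then c else 0.
Proof.
rewrite /mon WC /W.
have e1 : forall a : 'I_n.+1, \sum_(b < p.+1) (('X^a0 * ('X^b0)%:P : PP)`_a)`_b
   = if (a : nat) == a0 then (if (b0 < p.+1)%N then 1 else 0) else 0.
  move=> a; rewrite -sum_ind; case: eqP => ha.
    apply: eq_bigr => b _; by rewrite coef_mon0 ha eqxx /=; case: eqP.
  by rewrite big1 // => b _; rewrite coef_mon0; move/eqP/negbTE: ha => ->.
rewrite (eq_bigr _ (fun a _ => e1 a)) sum_ind !ltnS.
by case: (a0 <= n)%N; case: (b0 <= p)%N; rewrite ?mulr1 ?mulr0.
Qed.

Lemma polyCXn (K : nzRingType) (x : K) k : (x ^+ k)%:P = (x%:P) ^+ k.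
Proof. by rewrite rmorphXn. Qed.

Definition T (c : R) (e al be m : nat) : PP :=
  c%:P%:P * 'X^al * ('X^be)%:P * ((e%:R : PP) * 'X + ('X)%:P)^+m.

Lemma T_exp c e al be m : T c e al be m =
  \sum_(j < m.+1) mon (c * (e%:R)^+(m - j) * ('C(m, j))%:R) (al + (m - j)) (be + j).
Proof.
rewrite /T exprDn mulr_sumr; apply: eq_bigr => j _; rewrite /mon.
rewrite !polyCM !polyCXn !polyC_natr !exprD ?polyCM ?polyCXn.
rewrite exprMn -mulr_natr.
ring.
Qed.

Lemma W_T n p c e al be m : W n p (T c e al be m) =
  \sum_(j < m.+1) (if (al + (m - j) <= n)%N && (be + j <= p)%N
                   then c * e%:R^+(m - j) * 'C(m, j)%:R else 0).
Proof. by rewrite T_exp W_sum; apply: eq_bigr => j _; rewrite W_mon. Qed.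

Lemma W_T_le n p cn e al be m k1 k2 B :
  (forall j, (j <= m)%N -> (al + (m - j) <= n)%N -> (be + j <= p)%N ->
     [|| j == k1, j == k2 | cn == 0%N]) ->
  (forall j, (j <= m)%N -> (al + (m - j) <= n)%N -> (be + j <= p)%N ->
     (cn * e ^ (m - j) * 'C(m, j) <= B)%N) ->
  W n p (T cn%:R e al be m) <= (B + B)%:R.
Proof.
move=> hc hb; rewrite W_T.
pose cond := fun j : nat => (al + (m - j) <= n)%N && (be + j <= p)%N.
pose w := fun j : nat => ((cn * e ^ (m - j) * 'C(m, j))%:R : R).
have -> : \sum_(j < m.+1) (if (al + (m - j) <= n)%N && (be + j <= p)%N
                   then cn%:R * e%:R^+(m - j) * 'C(m, j)%:R else 0)
   = \sum_(j < m.+1) (if cond j then w j else 0 : R).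
  by apply: eq_bigr => j _; rewrite /cond /w !natrM natrX.
apply: (le_trans (y := \sum_(j < m.+1) ((if cond j && (j == k1 :> nat) then w j else 0)
                + (if cond j && (j == k2 :> nat) then w j else 0)))).
  apply: ler_sum => j _; rewrite /cond.
  case hj: ((al + (m - j) <= n)%N && (be + j <= p)%N) => /=; last by rewrite addr0.
  move/andP: hj => [h1 h2].
  have := hc j (ltn_ord j) h1 h2.
  case/or3P => [/eqP e1|/eqP e2|/eqP e0].
  - by rewrite e1 eqxx lerDl; case: ifP => // _; rewrite ler0n.
  - by rewrite e2 eqxx lerDr; case: ifP => // _; rewrite ler0n.
  - by rewrite /w e0 !mul0n !if_same addr0.
rewrite big_split /= natrD; apply: lerD.
  rewrite (sum_one _ k1 w (fun j => cond j && (j == k1))); last by move=> k /andP [_ /eqP].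
  case: ifP => // /andP [hk /andP [hcond _]]; rewrite ler_nat.
  by move/andP: hcond => [h1 h2]; apply: hb.
rewrite (sum_one _ k2 w (fun j => cond j && (j == k2))); last by move=> k /andP [_ /eqP].
case: ifP => // /andP [hk /andP [hcond _]]; rewrite ler_nat.
by move/andP: hcond => [h1 h2]; apply: hb.
Qed.

Lemma Pr_cons x s : Pr (x :: s) = Lin x * Pr s.
Proof. by rewrite /Pr big_cons. Qed.

Lemma Pr_cat s t : Pr (s ++ t) = Pr s * Pr t.
Proof. by rewrite /Pr big_cat. Qed.

Lemma D1_cat s t : D1 (s ++ t) = D1 s * Pr t + Pr s * D1 t.
Proof.
elim: s => [|x s IH] /=; first by rewrite /Pr big_nil mul0r add0r mul1r.
by rewrite IH Pr_cat Pr_cons; ring.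
Qed.

Lemma Pr_nseq k x : Pr (nseq k x) = Lin x ^+ k.
Proof.
elim: k => [|k IH]; first by rewrite /Pr big_nil.
by rewrite /= Pr_cons IH exprS.
Qed.

Lemma D1_nseq k x : D1 (nseq k x) = k%:R * Lin x ^+ k.-1.
Proof.
elim: k => [|k IH] /=; first by rewrite mul0r.
rewrite IH Pr_nseq; case: k {IH} => [|k] /=; first by rewrite mul0r mulr0 addr0 mul1r.
by rewrite exprS -[(k.+2)%:R]natr1 -[(k.+1)%:R]natr1; ring.
Qed.

Lemma Lin10 : Lin (1%N, 0%N) = 'X.
Proof. by rewrite /Lin /= mul1r mul0r polyC0 addr0. Qed.
Lemma Lin01 : Lin (0%N, 1%N) = 'X%:P.
Proof. by rewrite /Lin /= mul1r mul0r add0r. Qed.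
Lemma Lind0 d : Lin (d, 0%N) = d%:R * 'X.
Proof. by rewrite /Lin /= mul0r polyC0 addr0. Qed.
Lemma Lind1 d : Lin (d, 1%N) = d%:R * 'X + 'X%:P.
Proof. by rewrite /Lin /= mul1r. Qed.

Lemma Pr_bidegs n p d i :
  Pr (bidegs n p d i) = T (d%:R ^+ p) d.-1 (i.-1 + p) 1 (n - i).
Proof.
rewrite /bidegs !Pr_cat !Pr_nseq Lin10 Lind0 Lind1 Pr_cons Lin01 /Pr big_nil.
rewrite /T !(polyCXn, polyC_natr) exprD exprMn expr1.
ring.
Qed.

Lemma D1_bidegs n p d i :
  D1 (bidegs n p d i) =
    T ((i.-1 * d ^ p)%N%:R) d.-1 (i.-1.-1 + p) 1 (n - i)
  + T ((p * d ^ p.-1)%N%:R) d.-1 (i.-1 + p.-1) 1 (n - i)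
  + T (((n - i) * d ^ p)%N%:R) d.-1 (i.-1 + p) 1 (n - i).-1
  + T ((d ^ p)%N%:R) d.-1 (i.-1 + p) 0 (n - i).
Proof.
rewrite /bidegs !D1_cat !Pr_cat !D1_nseq !Pr_nseq Lin10 Lind0 Lind1 /= Lin01.
rewrite /Pr big_nil big_seq1 Lin01 /T !natrM !natrX !(polyCM, polyCXn, polyC_natr) !exprD !exprMn !expr1 expr0.
ring.
Qed.

Lemma binq q N : (0 < q)%N -> (q <= N)%N -> ('C(N, q.-1) <= q * 'C(N, q))%N.
Proof.
move=> q0 qN; have := mul_bin_left N q.-1; rewrite prednK // => ->.
by apply: leq_pmull; lia.
Qed.

Lemma bin_win m N p j : (m <= N)%N -> (p <= N)%N -> (0 < p)%N -> (j <= p)%N ->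
  (p <= j + 2)%N -> ('C(m, j) <= p ^ 2 * 'C(N, p))%N.
Proof.
move=> hm hp p0 hj1 hj2; apply: leq_trans (leq_bin2l _ hm) _.
have [->|[->|[-> hp1]]] : j = p \/ j = p.-1 \/ (j = p.-2 /\ (1 < p)%N) by lia.
- by apply: leq_pmull; rewrite expn_gt0 p0.
- have := binq p N p0 hp; nia.
- have h1 := binq p N p0 hp.
  have h2 : ('C(N, p.-1.-1) <= p.-1 * 'C(N, p.-1))%N by apply: binq; lia.
  nia.
Qed.

Lemma expb d p N k : (2 <= d)%N -> (0 < p)%N -> (p <= N)%N -> (k <= N - p + 1)%N ->
  (d ^ p.-1 * d.-1 ^ k <= d ^ p * d.-1 ^ (N - p))%N.
Proof.
move=> hd p0 pN hk; case: (leqP k (N - p)) => hk'.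
  by apply: leq_mul; apply: leq_pexp2l => //; lia.
have -> : k = (N - p).+1 by lia.
have -> : (d ^ p = d * d ^ p.-1)%N by rewrite -expnS prednK.
rewrite expnS.
have : (d.-1 <= d)%N by lia.
nia.
Qed.

Lemma comb cn x c n p Y C : (cn * x <= n * Y)%N -> (c <= p ^ 2 * C)%N ->
  (cn * x * c <= n * p ^ 2 * (C * Y))%N.
Proof.
move=> h1 h2; apply: leq_trans (leq_mul h1 h2) _.
by rewrite (_ : (n * p ^ 2 * (C * Y) = n * Y * (p ^ 2 * C))%N) //; ring.
Qed.

Lemma W_D1_bidegs n p d i : (0 < p)%N -> (p <= n)%N -> (2 <= d)%N -> (1 <= i)%N ->
  (i <= n - p + 1)%N ->
  W n p (D1 (bidegs n p d i)) <=
  (8 * (n * p ^ 2 * ('C(n, p) * (d ^ p * d.-1 ^ (n - p)))))%N%:R.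
Proof.
move=> p0 pn hd i1 hi.
set B := (n * p ^ 2 * ('C(n, p) * (d ^ p * d.-1 ^ (n - p))))%N.
rewrite D1_bidegs !WD.
apply: (le_trans (y := (B + B)%:R + (B + B)%:R + (B + B)%:R + (B + B)%:R)); last first.
  by rewrite -!natrD le_eqVlt; apply/orP; left; apply/eqP; congr (_%:R); ring.
have hd1 : (0 < d.-1)%N by lia.
have hd0 : (0 < d)%N by lia.
repeat apply: lerD.
- apply: (W_T_le _ _ _ _ _ _ _ p.-2 p.-1) => j hj h1 h2.
    have [->|hi2] : i = 1%N \/ (2 <= i)%N by lia.
      by rewrite /= mul0n eqxx !orbT.
    lia.
  have [->|hi2] : i = 1%N \/ (2 <= i)%N by lia.
    by rewrite /= !mul0n.
  apply: comb; last by apply: bin_win; lia.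
  rewrite -mulnA; apply: leq_mul; first by lia.
  by apply: leq_mul => //; apply: leq_pexp2l => //; lia.
- apply: (W_T_le _ _ _ _ _ _ _ p.-2 p.-1) => j hj h1 h2; first by lia.
  apply: comb; last by apply: bin_win; lia.
  rewrite -mulnA; apply: leq_mul; first by lia.
  by apply: expb => //; lia.
- apply: (W_T_le _ _ _ _ _ _ _ p.-2 p.-1) => j hj h1 h2.
    have [->|hi2] : (n - i = 0)%N \/ (1 <= n - i)%N by lia.
      by rewrite /= mul0n eqxx !orbT.
    lia.
  apply: comb; last by apply: bin_win; lia.
  rewrite -mulnA; apply: leq_mul; first by lia.
  by apply: leq_mul => //; apply: leq_pexp2l => //; lia.
- apply: (W_T_le _ _ _ _ _ _ _ p.-1 p) => j hj h1 h2; first by lia.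
  apply: comb; last by apply: bin_win; lia.
  apply: leq_trans (leq_pmull _ _); last by lia.
  by apply: leq_mul => //; apply: leq_pexp2l => //; lia.
Qed.

Lemma nn_D1e (es : seq (R * (nat * nat))) H : (forall x, x \in es -> x.1 <= H) ->
  nn (H%:P%:P * D1 (map snd es) - D1e es).
Proof.
elim: es => [|x s IH] hx /=; first by rewrite mulr0 subr0 => a b; rewrite !coef0.
have -> : H%:P%:P * (Pr (map snd s) + Lin x.2 * D1 (map snd s))
   - (x.1%:P%:P * Pr (map snd s) + Lin x.2 * D1e s)
   = (H - x.1)%:P%:P * Pr (map snd s) + Lin x.2 * (H%:P%:P * D1 (map snd s) - D1e s).
  by rewrite !polyCB; ring.
apply: nnD; apply: nnM.
- by apply: nnC; rewrite subr_ge0; apply: hx; rewrite mem_head.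
- exact: nn_Pr.
- exact: nn_Lin.
- by apply: IH => y hy; apply: hx; rewrite in_cons hy orbT.
Qed.

Lemma part1 n p d i : (0 < p)%N -> (p <= n)%N -> (2 <= d)%N -> (1 <= i)%N ->
  (i <= n - p + 1)%N ->
  Cn R n p (bidegs n p d i) = ('C(n - i, p - 1) * d ^ p * (d - 1) ^ (n - p + 1 - i))%:R.
Proof.
move=> p0 pn hd i1 hi.
rewrite Cn_W Pr_bidegs W_T.
pose F := fun j : nat => ((d%:R ^+ p * d.-1%:R ^+ (n - i - j) * 'C(n - i, j)%:R) : R).
pose P := fun j : nat => (j <= n - i)%N && ((i.-1 + p + (n - i - j) <= n)%N && (1 + j <= p)%N).
rewrite (eq_bigr (fun j : 'I_ _ => if P j then F j else 0)); last first.
  by move=> j _; rewrite /P (ltn_ord j : (j <= n - i)%N).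
rewrite (sum_one _ p.-1 F P); last by move=> k; rewrite /P => /andP [h1 /andP [h2 h3]]; lia.
have -> : ((p.-1 < (n - i).+1)%N && P p.-1) = true.
  by apply/idP; rewrite /P; apply/andP; split; [lia | apply/andP; split; [lia | apply/andP; split; lia]].
rewrite /F !natrM !natrX.
have -> : (n - i - p.-1 = n - p + 1 - i)%N by lia.
have -> : (p.-1 = p - 1)%N by lia.
have -> : (d.-1 = d - 1)%N by lia.
by rewrite mulrC mulrA.
Qed.

Lemma size_bidegs n p d i : (1 <= i)%N -> (i <= n)%N -> size (bidegs n p d i) = (n + p)%N.
Proof. by move=> *; rewrite /bidegs !size_cat !size_nseq /=; lia. Qed.

Lemma map_snd_etas n p d i (s : nat -> R) : (1 <= i)%N -> (i <= n)%N ->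
  map snd (etas n p d i s) = bidegs n p d i.
Proof.
move=> i1 i2; rewrite /etas -map_comp.
have -> : [seq (snd \o (fun j : nat * (nat * nat) =>
     (s j.1 + log2 (n.+1)%:R * (j.2.1)%:R + log2 (p.+1)%:R * (j.2.2)%:R, j.2))) x
     | x <- zip (iota 0 (n + p)) (bidegs n p d i)] = unzip2 (zip (iota 0 (n + p)) (bidegs n p d i)).
  by [].
by rewrite unzip2_zip // size_iota size_bidegs.
Qed.

Lemma mem_zip' (T1 T2 : eqType) (s : seq T1) (t : seq T2) x y :
  (x, y) \in zip s t -> x \in s /\ y \in t.
Proof.
elim: s t => [|a s IH] [|b t] //=.
rewrite in_cons => /orP [/eqP [-> ->]|h]; first by split; rewrite ?in_cons eqxx.
by have [h1 h2] := IH _ h; rewrite ?in_cons h1 h2 !orbT.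
Qed.

Lemma bidegs_mem n p d i dj : (1 <= d)%N -> dj \in bidegs n p d i -> (dj.1 <= d)%N /\ (dj.2 <= 1)%N.
Proof.
move=> d1.
rewrite /bidegs !mem_cat !mem_nseq !in_cons in_nil orbF.
case/or4P => [/andP [_ /eqP ->]|/andP [_ /eqP ->]|/andP [_ /eqP ->]|/eqP ->] /=; lia.
Qed.

Lemma Hn_bound n p d i (s : nat -> R) H : (0 < p)%N -> (p <= n)%N -> (2 <= d)%N -> (1 <= i)%N ->
  (i <= n - p + 1)%N ->
  (forall x, x \in etas n p d i s -> x.1 <= H) -> 0 <= H ->
  Hn n p (etas n p d i s) <=
   ('C(n, p) * (d ^ p * d.-1 ^ (n - p)))%N%:R
   + H * (8 * (n * p ^ 2 * ('C(n, p) * (d ^ p * d.-1 ^ (n - p)))))%N%:R.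
Proof.
move=> p0 pn hd i1 hi hH H0.
have i2 : (i <= n)%N by lia.
rewrite Hn_W; case: (P3_coef (etas n p d i s)) => -> ->.
rewrite map_snd_etas // -Cn_W part1 //; apply: lerD.
  rewrite ler_nat -mulnA; apply: leq_mul.
    have hni : (n - i <= n.-1)%N by lia.
    apply: (leq_trans (leq_bin2l _ hni)).
    have -> : n = n.-1.+1 by lia.
    have -> : p = p.-1.+1 by lia.
    by rewrite binS /= subn1 /= leq_addl.
  apply: leq_mul => //; rewrite subn1; apply: leq_pexp2l; lia.
apply: le_trans (W_le _ _ _ _ (nn_D1e _ _ hH)) _.
rewrite WC map_snd_etas //; apply: ler_wpM2l => //.
exact: W_D1_bidegs.
Qed.

End Poly.

Lemma Dn_facts n p d : (0 < p)%N -> (p <= n)%N -> (2 <= d)%N ->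
  [/\ ('C(n, p) * (d ^ p * d.-1 ^ (n - p)) = 'C(n, p) * d ^ p * (d - 1) ^ (n - p))%N,
      (1 <= 'C(n, p) * d ^ p * (d - 1) ^ (n - p))%N &
      (2 ^ p <= 'C(n, p) * d ^ p * (d - 1) ^ (n - p))%N].
Proof.
move=> p0 pn hd; rewrite mulnA subn1; split => //.
  by rewrite !muln_gt0 bin_gt0 pn !expn_gt0 /=; lia.
apply: leq_trans (_ : (d ^ p <= _)%N); first by rewrite leq_exp2r //; lia.
rewrite mulnC mulnA; apply: leq_pmull.
rewrite muln_gt0 bin_gt0 pn expn_gt0 /=; lia.
Qed.

Theorem lemma1 (R : realType) :
  (forall (n p d i : nat),
      (0 < p)%N -> (p <= n)%N -> (2 <= d)%N -> (1 <= i)%N -> (i <= n - p + 1)%N ->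
      Cn R n p (bidegs n p d i)
      = ('C(n - i, p - 1) * d ^ p * (d - 1) ^ (n - p + 1 - i))%:R)
  /\
  (forall (C1 : R) (k1 : nat), exists (C : R) (k : nat),
    forall (n p d i : nat) (b eps : R) (s : nat -> R),
      (0 < p)%N -> (p <= n)%N -> (2 <= d)%N -> (1 <= i)%N -> (i <= n - p + 1)%N ->
      0 < b -> 0 < eps -> eps < 1 ->
      let Gf := b + d%:R * log2 (eps^-1) + d%:R * n%:R in
      let Gl := log2 (eps^-1) + n%:R * log2 d%:R in
      (forall j, (j < n + p)%N ->
         if involves_fA n p i j then softO_le C1 k1 (s j) Gf
         else softO_le C1 k1 (s j) Gl) ->
      softO_le C k (Hn n p (etas n p d i s))
        (n%:R * Gf * ('C(n, p) * d ^ p * (d - 1) ^ (n - p))%:R)).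
Proof.
split; first by move=> n p d i *; apply: part1.
move=> C1 k1.
pose C1' := Num.max C1 0. pose K1 := C1' + 2.
have C1le : C1 <= C1' by rewrite /C1' le_max lexx.
have C1'0 : 0 <= C1' by rewrite /C1' le_max lexx orbT.
exists (1 + 8%:R * K1), (k1 + 2)%N.
move=> n p d i b eps s p0 pn hd i1 hi b0 e0 e1 Gf Gl hs.
have hle : 0 <= log2 eps^-1 by apply: log2_ge0; rewrite invf_ge1 // ltW.
have n1 : (1 <= n)%N by lia.
have hn : 1 <= n%:R :> R by rewrite ler1n.
have hdR : 2 <= d%:R :> R by rewrite ler_nat.
have hlogd : log2 (d%:R : R) <= d%:R.
  by apply: log2_le_nat; [apply: ltnW; apply: ltn_expl | lia].
have hlogd0 : 0 <= log2 (d%:R : R) by apply: log2_ge0; rewrite ler1n; lia.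
have Gfdn : d%:R * n%:R <= Gf.
  rewrite /Gf; have : 0 <= d%:R * log2 eps^-1 by apply: mulr_ge0 => //; lra.
  lra.
have GlGf : Gl <= Gf.
  rewrite /Gl /Gf.
  have h1 : log2 eps^-1 <= d%:R * log2 eps^-1 by apply: ler_peMl => //; lra.
  have h2 : n%:R * log2 (d%:R : R) <= n%:R * d%:R by apply: ler_wpM2l => //; lra.
  have h3 : n%:R * d%:R = d%:R * n%:R :> R by rewrite mulrC.
  lra.
have Gl0 : 0 <= Gl by rewrite /Gl; apply: addr_ge0 => //; apply: mulr_ge0 => //; lra.
have Gf2 : 2 <= Gf.
  have := ler_pM (ler0n _ 2) ler01 hdR hn; rewrite mulr1; lra.
pose L := log2 (2 + Gf).
have L1 : 1 <= L.
  have h : log2 ((2 : R) ^+ 1) <= L by apply: log2_le; rewrite ?expr1; lra.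
  by rewrite log2_exp in h.
have Lk1 : 1 <= L ^+ k1 by apply: exprn_ege1.
pose H := K1 * Gf * L ^+ k1.
have H0 : 0 <= H by rewrite /H; apply: mulr_ge0; [apply: mulr_ge0; rewrite /K1; lra | lra].
have hH : forall x, x \in etas n p d i s -> x.1 <= H.
  move=> x /mapP [[j dj] hjd ->] /=.
  have [hj hdj] := mem_zip' _ _ _ _ _ _ hjd.
  rewrite mem_iota add0n in hj; move/andP: hj => [_ hj].
  have [hd1 hd2] := bidegs_mem _ _ _ _ _ (ltnW hd) hdj.
  have hsj : s j <= C1' * Gf * L ^+ k1.
    have := hs j hj; case: (involves_fA n p i j) => /= h; rewrite /softO_le in h.
      apply: le_trans h _; rewrite -!mulrA; apply: ler_wpM2r => //.
      by apply: mulr_ge0; lra.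
    apply: le_trans h _; rewrite -!mulrA.
    have l0 : 0 <= log2 (2 + Gl) by apply: log2_ge0; lra.
    apply: le_trans (ler_wpM2r _ C1le) _.
      by apply: mulr_ge0 => //; apply: exprn_ge0.
    apply: ler_wpM2l => //; apply: ler_pM => //; first by apply: exprn_ge0.
    by apply: powle => //; apply: log2_le; lra.
  have hl1 : log2 (n.+1)%:R * (dj.1)%:R <= n%:R * d%:R :> R.
    apply: ler_pM => //; first by apply: log2_ge0; rewrite ler1n.
      by apply: log2_le_nat => //; apply: ltn_expl.
    by rewrite ler_nat.
  have hl2 : log2 (p.+1)%:R * (dj.2)%:R <= n%:R :> R.
    rewrite -[n%:R]mulr1; apply: ler_pM => //; first by apply: log2_ge0; rewrite ler1n.
      apply: le_trans (_ : p%:R <= n%:R) ; last by rewrite ler_nat.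
      by apply: log2_le_nat => //; apply: ltn_expl.
    by rewrite lern1.
  have hnd : n%:R <= n%:R * d%:R :> R by apply: ler_peMr; lra.
  have hGL : Gf <= Gf * L ^+ k1 by apply: ler_peMr => //; lra.
  have h3 : n%:R * d%:R = d%:R * n%:R :> R by rewrite mulrC.
  rewrite /H /K1; lra.
have hb := @Hn_bound R n p d i s H p0 pn hd i1 hi hH H0.
have [eD Dn1 Dn2] := Dn_facts _ _ _ p0 pn hd.
rewrite eD in hb.
move: (('C(n, p) * d ^ p * (d - 1) ^ (n - p))%N) Dn1 Dn2 hb => Dn Dn1 Dn2 hb.
rewrite /softO_le; apply: le_trans hb _.
pose G := n%:R * Gf * Dn%:R.
have Dn1R : 1 <= Dn%:R :> R by rewrite ler1n.
have nGf : 1 <= n%:R * Gf by have := ler_pM ler01 ler01 hn (_ : 1 <= Gf); rewrite mulr1; apply; lra.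
have GDn : Dn%:R <= G by rewrite /G; apply: ler_peMl => //; lra.
have GGf : Gf <= G.
  rewrite /G; apply: le_trans (_ : n%:R * Gf <= _); first by apply: ler_peMl; lra.
  by apply: ler_peMr; lra.
pose La := log2 (2 + G).
have La1 : 1 <= La.
  have h : log2 ((2 : R) ^+ 1) <= La by apply: log2_le; rewrite ?expr1; lra.
  by rewrite log2_exp in h.
have LLa : L <= La by apply: log2_le; lra.
have pLa : p%:R <= La.
  rewrite -log2_exp; apply: log2_le; first by apply: exprn_gt0.
  apply: le_trans (_ : Dn%:R <= _); last lra.
  by rewrite -natrX ler_nat.
have X1 : 1 <= La ^+ (k1 + 2) by apply: exprn_ege1.
have t1 : Dn%:R <= G * La ^+ (k1 + 2).
  by apply: le_trans GDn _; apply: ler_peMr => //; lra.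
have tp : L ^+ k1 * p%:R ^+ 2 <= La ^+ (k1 + 2).
  rewrite exprD; apply: ler_pM; [apply: exprn_ge0; lra | apply: exprn_ge0; exact: ler0n | | ].
    by apply: powle; lra.
  by apply: powle => //; exact: ler0n.
have eH : H * (8 * (n * p ^ 2 * Dn))%N%:R = 8%:R * K1 * G * (L ^+ k1 * p%:R ^+ 2).
  by rewrite /H /G !natrM; ring.
have t2 : 8%:R * K1 * G * (L ^+ k1 * p%:R ^+ 2) <= 8%:R * K1 * G * La ^+ (k1 + 2).
  by apply: ler_wpM2l => //; apply: mulr_ge0; [apply: mulr_ge0; rewrite /K1; lra | lra].
rewrite eH -/G.
have e3 : (1 + 8%:R * K1) * G * La ^+ (k1 + 2) = G * La ^+ (k1 + 2) + 8%:R * K1 * G * La ^+ (k1 + 2).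
  by ring.
rewrite e3; lra.
Qed.
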